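(* There are exactly $15$ complete number-conserving $3$-state $3$-neighbor vector-valued fuzzy cellular automaton rules, i.e. exactly 15 local rules $f$ for which $\nu^t(k)$ is an additive conserved quantity for every $k=1,2,3$. Their local rules $f(\bm{x},\bm{y},\bm{z})$ are: $(y_1,y_2,y_3)^\top$; $(z_1,z_2,z_3)^\top$; $(x_1,x_2,x_3)^\top$; $(x_1y_2+y_1z_1+y_1z_3,\ x_2y_2+x_3y_2+y_1z_2,\ y_3)^\top$; $(x_1y_3+y_1z_1+y_1z_2,\ y_2,\ x_2y_3+x_3y_3+y_1z_3)^\top$; $(y_1,\ x_2y_3+y_2z_1+y_2z_2,\ x_1y_3+x_3y_3+y_2z_3)^\top$; $(y_1,\ x_1y_2+x_2y_2+y_3z_2,\ x_3y_2+y_3z_1+y_3z_3)^\top$; $(x_1y_1+x_2y_1+y_3z_1,\ y_2,\ x_3y_1+y_3z_2+y_3z_3)^\top$; $(x_1y_1+x_3y_1+y_2z_1,\ x_2y_1+y_2z_2+y_2z_3,\ y_3)^\top$; $(x_1y_2+x_1y_3+y_1z_1,\ x_2y_2+x_3y_2+y_1z_2,\ x_2y_3+x_3y_3+y_1z_3)^\top$; $(x_1y_2+y_1z_1+y_1z_3,\ x_2y_2+y_1z_2+y_3z_2,\ x_3y_2+y_3z_1+y_3z_3)^\top$; $(x_1y_3+y_1z_1+y_1z_2,\ x_2y_3+y_2z_1+y_2z_2,\ x_3y_3+y_1z_3+y_2z_3)^\top$; $(x_1y_1+x_2y_1+y_3z_1,\ x_1y_2+x_2y_2+y_3z_2,\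 x_3y_1+x_3y_2+y_3z_3)^\top$; $(x_1y_1+x_3y_1+y_2z_1,\ x_2y_1+x_2y_3+y_2z_2,\ x_1y_3+x_3y_3+y_2z_3)^\top$; $(x_1y_1+y_2z_1+y_3z_1,\ x_2y_1+y_2z_2+y_2z_3,\ x_3y_1+y_3z_2+y_3z_3)^\top$.
   Context: Let $\bm{e}_1,\bm{e}_2,\bm{e}_3$ be the standard basis of $\mathbb{R}^3$ and $\Delta=\{(x_1,x_2,x_3)^{\top}\mid x_1+x_2+x_3=1,\ x_i\ge0\}$. A $3$-state $3$-neighbor vector-valued fuzzy cellular automaton ($3$-VFCA) has cells $i\in\mathbb{Z}$ with states $\bm{x}_i^t\in\Delta$, $t\in\mathbb{Z}_{\ge0}$, evolving by $\bm{x}_i^{t+1}=f(\bm{x}_{i-1}^t,\bm{x}_i^t,\bm{x}_{i+1}^t)$, where the local rule has the form $f(\bm{x},\bm{y},\bm{z})=\sum_{j,k,\ell=1}^3x_jy_kz_\ell\,h(\bm{e}_j,\bm{e}_k,\bm{e}_\ell)$ for some map $h:\{\bm{e}_1,\bm{e}_2,\bm{e}_3\}^3\to\{\bm{e}_1,\bm{e}_2,\bm{e}_3\}$ (so rules are in bijection with such $h$; here $\bm{x}=(x_1,x_2,x_3)^\top$ etc.). Consider $L$-periodic configurations ($\bm{x}_i^t=\bm{x}_{i+L}^t$, $L$ a positive integer) and $\nu^t(k)=\sum_{i=1}^L[\bm{x}_i^t]_k$, where $[\bm{x}]_k$ is the $k$th entry. $\nu^t(k)$ is an additive conserved quantity if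 $\nu^{t+1}(k)=\nu^t(k)$ for all $t$ and every periodic initial configuration in $\Delta$ (of every period $L$). A rule is complete number-conserving if this holds for all $k=1,2,3$. *)

(* Defs.v *)
From HB Require Import structures.
From mathcomp Require Import all_boot all_order all_algebra.
From mathcomp Require Import reals.
Set Implicit Arguments. Unset Strict Implicit. Unset Printing Implicit Defensive.
Import Order.TTheory GRing.Theory Num.Theory.
Local Open Scope ring_scope.

Section VFCA.
Variable R : realType.

(* states are column vectors in R^3; [x]_k (k = 1,2,3) is  co x (k-1) *)
Definition co (x : 'cV[R]_3) (i : nat) : R := x (inord i) 0.

Definition in_simplex (x : 'cV[R]_3) : Prop :=
  (\sum_(k < 3) x k 0 = 1) /\ (forall k : 'I_3, 0 <= x k 0).

Definition e (j : 'I_3) : 'cV[R]_3 := delta_mx j 0.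

(* A rule is a map h : {e1,e2,e3}^3 -> {e1,e2,e3}; basis vectors are
   represented by their indices. *)
Definition rule := {ffun 'I_3 * 'I_3 * 'I_3 -> 'I_3}.

Definition local (h : rule) (x y z : 'cV[R]_3) : 'cV[R]_3 :=
  \sum_(j < 3) \sum_(k < 3) \sum_(l < 3)
     (x j 0 * y k 0 * z l 0) *: e (h (j, k, l)).

Definition config := int -> 'cV[R]_3.

Definition step (h : rule) (c : config) : config :=
  fun i => local h (c (i - 1)) (c i) (c (i + 1)).

Definition evol (h : rule) (t : nat) (c : config) : config := iter t (step h) c.

Definition nu (L : nat) (c : config) (k : 'I_3) : R :=
  \sum_(1 <= i < L.+1) c (Posz i) k 0.

Definition additive_conserved (h : rule) (k : 'I_3) : Prop :=
  forall (L : nat), (0 < L)%N ->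
  forall c : config,
    (forall i : int, c (i + Posz L) = c i) ->
    (forall i : int, in_simplex (c i)) ->
    forall t : nat, nu L (evol h t.+1 c) k = nu L (evol h t c) k.

Definition complete_number_conserving (h : rule) : Prop :=
  forall k : 'I_3, additive_conserved h k.

Definition vec3 (a b c : R) : 'cV[R]_3 := \col_(i < 3) [:: a; b; c]`_i.

(* the 15 local rules listed in the theorem, indexed 0..14 *)
Definition listed (n : nat) (x y z : 'cV[R]_3) : 'cV[R]_3 :=
  let x1 := co x 0 in let x2 := co x 1 in let x3 := co x 2 in
  let y1 := co y 0 in let y2 := co y 1 in let y3 := co y 2 in
  let z1 := co z 0 in let z2 := co z 1 in let z3 := co z 2 in
  match n with
  | 0 => vec3 y1 y2 y3
  | 1 => vec3 z1 z2 z3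
  | 2 => vec3 x1 x2 x3
  | 3 => vec3 (x1*y2 + y1*z1 + y1*z3) (x2*y2 + x3*y2 + y1*z2) y3
  | 4 => vec3 (x1*y3 + y1*z1 + y1*z2) y2 (x2*y3 + x3*y3 + y1*z3)
  | 5 => vec3 y1 (x2*y3 + y2*z1 + y2*z2) (x1*y3 + x3*y3 + y2*z3)
  | 6 => vec3 y1 (x1*y2 + x2*y2 + y3*z2) (x3*y2 + y3*z1 + y3*z3)
  | 7 => vec3 (x1*y1 + x2*y1 + y3*z1) y2 (x3*y1 + y3*z2 + y3*z3)
  | 8 => vec3 (x1*y1 + x3*y1 + y2*z1) (x2*y1 + y2*z2 + y2*z3) y3
  | 9 => vec3 (x1*y2 + x1*y3 + y1*z1) (x2*y2 + x3*y2 + y1*z2) (x2*y3 + x3*y3 + y1*z3)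
  | 10 => vec3 (x1*y2 + y1*z1 + y1*z3) (x2*y2 + y1*z2 + y3*z2) (x3*y2 + y3*z1 + y3*z3)
  | 11 => vec3 (x1*y3 + y1*z1 + y1*z2) (x2*y3 + y2*z1 + y2*z2) (x3*y3 + y1*z3 + y2*z3)
  | 12 => vec3 (x1*y1 + x2*y1 + y3*z1) (x1*y2 + x2*y2 + y3*z2) (x3*y1 + x3*y2 + y3*z3)
  | 13 => vec3 (x1*y1 + x3*y1 + y2*z1) (x2*y1 + x2*y3 + y2*z2) (x1*y3 + x3*y3 + y2*z3)
  | _ => vec3 (x1*y1 + y2*z1 + y3*z1) (x2*y1 + y2*z2 + y2*z3) (x3*y1 + y3*z2 + y3*z3)
  end.

Definition rule_is (h : rule) (F : 'cV[R]_3 -> 'cV[R]_3 -> 'cV[R]_3 -> 'cV[R]_3) : Prop :=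
  forall x y z, in_simplex x -> in_simplex y -> in_simplex z -> local h x y z = F x y z.

End VFCA.

(* Main.v *)
Require Import Defs.
From HB Require Import structures.
From mathcomp Require Import all_boot all_order all_algebra.
From mathcomp Require Import reals.
From mathcomp Require Import zify ring lra.
Import Order.TTheory GRing.Theory Num.Theory.
Set Implicit Arguments. Unset Strict Implicit. Unset Printing Implicit Defensive.

Definition pick3 (P : nat -> bool) : nat := if P 0 then 0 else if P 1 then 1 else 2.
Definition ind (u v : nat) : nat := (u == v).
Definition i3 := iota 0 3.

Definition mk1 (g : nat -> nat -> nat) (b : nat) : nat :=
  pick3 (fun k => ind b k + 4 * ind 0 k == 1 + ind (g b 0) k + 2 * ind (g 0 0) k + ind (g 0 b) k).
Definition mk2 (g : nat -> nat -> nat) (m1 : nat -> nat) (a b : nat) : nat :=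
  pick3 (fun k => ind a k + ind b k + 3 * ind 0 k == 1 + ind (g a b) k + ind (m1 b) k + ind (g 0 0) k + ind (g 0 a) k).
Definition mk3 (g : nat -> nat -> nat) (m2 : nat -> nat -> nat) (m1 : nat -> nat) (a b c : nat) : nat :=
  pick3 (fun k => ind a k + ind b k + ind c k + 2 * ind 0 k == 1 + ind (g a b) k + ind (m2 b c) k + ind (m1 c) k + ind (g 0 a) k).

Definition t1 g := [seq mk1 g b | b <- i3].
Definition t2 g l1 := [seq mk2 g (nth 0 l1) (i %/ 3) (i %% 3) | i <- iota 0 9].
Definition t3' g l1 l2 := [seq mk3 g (fun b c => nth 0 l2 (b * 3 + c)) (nth 0 l1) (i %/ 9) (i %/ 3 %% 3) (i %% 3) | i <- iota 0 27].
Definition t3 g := let l1 := t1 g in let l2 := t2 g l1 in t3' g l1 l2.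

Definition Wb (H : nat -> nat -> nat -> nat) a b c m : bool :=
  ind (H 0 a b) m + ind (H a b c) m + ind (H b c 0) m + ind (H c 0 0) m + ind (H 0 0 a) m
  == ind a m + ind b m + ind c m + 2 * ind 0 m.
Definition DNb H := all (fun a => all (fun b => all (fun c => all (fun m => Wb H a b c m) i3) i3) i3) i3.

Fixpoint seqs3 n : seq (seq nat) :=
  if n is n'.+1 then [seq x :: r | x <- i3, r <- seqs3 n'] else [:: [::]].
Definition gl (l : seq nat) a b := nth 0 l (a * 3 + b).
Definition tf (t : seq nat) a b c := nth 0 t (a * 9 + b * 3 + c).
Definition agreeb (H : nat -> nat -> nat -> nat) (t : seq nat) :=
  all (fun a => all (fun b => all (fun c => H a b c == tf t a b c) i3) i3) i3.
Definition tables : seq (seq nat) := [::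
  [::0; 0; 0; 1; 1; 1; 2; 2; 2; 0; 0; 0; 1; 1; 1; 2; 2; 2; 0; 0; 0; 1; 1; 1; 2; 2; 2];
  [::0; 1; 2; 0; 1; 2; 0; 1; 2; 0; 1; 2; 0; 1; 2; 0; 1; 2; 0; 1; 2; 0; 1; 2; 0; 1; 2];
  [::0; 0; 0; 0; 0; 0; 0; 0; 0; 1; 1; 1; 1; 1; 1; 1; 1; 1; 2; 2; 2; 2; 2; 2; 2; 2; 2];
  [::0; 1; 0; 0; 0; 0; 2; 2; 2; 0; 1; 0; 1; 1; 1; 2; 2; 2; 0; 1; 0; 1; 1; 1; 2; 2; 2];
  [::0; 0; 2; 1; 1; 1; 0; 0; 0; 0; 0; 2; 1; 1; 1; 2; 2; 2; 0; 0; 2; 1; 1; 1; 2; 2; 2];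
  [::0; 0; 0; 1; 1; 2; 2; 2; 2; 0; 0; 0; 1; 1; 2; 1; 1; 1; 0; 0; 0; 1; 1; 2; 2; 2; 2];
  [::0; 0; 0; 1; 1; 1; 2; 1; 2; 0; 0; 0; 1; 1; 1; 2; 1; 2; 0; 0; 0; 2; 2; 2; 2; 1; 2];
  [::0; 0; 0; 1; 1; 1; 0; 2; 2; 0; 0; 0; 1; 1; 1; 0; 2; 2; 2; 2; 2; 1; 1; 1; 0; 2; 2];
  [::0; 0; 0; 0; 1; 1; 2; 2; 2; 1; 1; 1; 0; 1; 1; 2; 2; 2; 0; 0; 0; 0; 1; 1; 2; 2; 2];
  [::0; 1; 2; 0; 0; 0; 0; 0; 0; 0; 1; 2; 1; 1; 1; 2; 2; 2; 0; 1; 2; 1; 1; 1; 2; 2; 2];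
  [::0; 1; 0; 0; 0; 0; 2; 1; 2; 0; 1; 0; 1; 1; 1; 2; 1; 2; 0; 1; 0; 2; 2; 2; 2; 1; 2];
  [::0; 0; 2; 1; 1; 2; 0; 0; 0; 0; 0; 2; 1; 1; 2; 1; 1; 1; 0; 0; 2; 1; 1; 2; 2; 2; 2];
  [::0; 0; 0; 1; 1; 1; 0; 1; 2; 0; 0; 0; 1; 1; 1; 0; 1; 2; 2; 2; 2; 2; 2; 2; 0; 1; 2];
  [::0; 0; 0; 0; 1; 2; 2; 2; 2; 1; 1; 1; 0; 1; 2; 1; 1; 1; 0; 0; 0; 0; 1; 2; 2; 2; 2];
  [::0; 0; 0; 0; 1; 1; 0; 2; 2; 1; 1; 1; 0; 1; 1; 0; 2; 2; 2; 2; 2; 0; 1; 1; 0; 2; 2]].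

Definition chk (l : seq nat) := let t := t3 (gl l) in DNb (tf t) ==> has (agreeb (tf t)) tables.
Lemma bigcheckP : all chk [seq 0 :: r | r <- seqs3 8].
Proof. vm_compute. reflexivity. Qed.

Definition DN (H : nat -> nat -> nat -> nat) :=
  forall a b c m, a < 3 -> b < 3 -> c < 3 -> m < 3 -> Wb H a b c m.
Definition rng (H : nat -> nat -> nat -> nat) :=
  forall a b c, a < 3 -> b < 3 -> c < 3 -> H a b c < 3.

Lemma pick3P P v : v < 3 -> (forall k, k < 3 -> P k = (v == k)) -> pick3 P = v.
Proof. by move=> hv HP; rewrite /pick3 !HP //; clear HP; case: v hv => [|[|[|]]]. Qed.

Lemma indE u k : (u == k) = (ind u k == 1).
Proof. by rewrite /ind; case: (u == k). Qed.

Section Key.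
Variables (H : nat -> nat -> nat -> nat) (g : nat -> nat -> nat).
Hypotheses (hD : DN H) (hr : rng H) (hg : forall x y, x < 3 -> y < 3 -> g x y = H 0 x y).

Lemma key1 b : b < 3 -> mk1 g b = H b 0 0.
Proof.
move=> hb; apply: pick3P; first exact: hr.
move=> k hk; rewrite /mk1 !hg // [X in _ = X]indE.
have /eqP := hD hb (isT : 0 < 3) (isT : 0 < 3) hk.
by move=> W; apply/eqP/eqP; lia.
Qed.

Lemma key2 m1 a b : a < 3 -> b < 3 -> m1 b = H b 0 0 -> mk2 g m1 a b = H a b 0.
Proof.
move=> ha hb e1; apply: pick3P; first exact: hr.
move=> k hk; rewrite /mk2 !hg // e1 [X in _ = X]indE.
have /eqP := hD ha hb (isT : 0 < 3) hk.
by move=> W; apply/eqP/eqP; lia.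
Qed.

Lemma key3 m1 m2 a b c : a < 3 -> b < 3 -> c < 3 -> m1 c = H c 0 0 -> m2 b c = H b c 0 ->
  mk3 g m2 m1 a b c = H a b c.
Proof.
move=> ha hb hc e1 e2; apply: pick3P; first exact: hr.
move=> k hk; rewrite /mk3 !hg // e1 e2 [X in _ = X]indE.
have /eqP := hD ha hb hc hk.
by move=> W; apply/eqP/eqP; lia.
Qed.
End Key.

Lemma nth_t1 g b : b < 3 -> nth 0 (t1 g) b = mk1 g b.
Proof. by case: b => [|[|[|]]]. Qed.

Lemma nth_t2 g l1 a b : a < 3 -> b < 3 -> nth 0 (t2 g l1) (a * 3 + b) = mk2 g (nth 0 l1) a b.
Proof. by case: a => [|[|[|]]] // _; case: b => [|[|[|]]]. Qed.

Lemma nth_t3 g l1 l2 a b c : a < 3 -> b < 3 -> c < 3 ->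
  tf (t3' g l1 l2) a b c = mk3 g (fun b c => nth 0 l2 (b * 3 + c)) (nth 0 l1) a b c.
Proof.
by case: a => [|[|[|]]] // _; case: b => [|[|[|]]] // _; case: c => [|[|[|]]].
Qed.

Lemma mem_seqs3 r : all (fun x => x < 3) r -> r \in seqs3 (size r).
Proof.
elim: r => [|x r IH] // /andP[hx hr].
have := @allpairs_f_dep _ _ _ (fun x r => x :: r) i3 (fun _ => seqs3 (size r)) x r.
by rewrite mem_iota hx => /(_ isT (IH hr)).
Qed.

Lemma DN_DNb H : DN H -> DNb H.
Proof.
move=> hD; apply/allP => a; rewrite mem_iota => /andP[_ ha].
apply/allP => b; rewrite mem_iota => /andP[_ hb].
apply/allP => c; rewrite mem_iota => /andP[_ hc].
apply/allP => m; rewrite mem_iota => /andP[_ hm].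
exact: hD.
Qed.

Lemma DNb_DN H : DNb H -> DN H.
Proof.
move=> hD a b c m ha hb hc hm.
move/allP: hD => /(_ a); rewrite mem_iota ha => /(_ isT).
move/allP => /(_ b); rewrite mem_iota hb => /(_ isT).
move/allP => /(_ c); rewrite mem_iota hc => /(_ isT).
by move/allP => /(_ m); rewrite mem_iota hm => /(_ isT).
Qed.

Lemma DN_ext H1 H2 : (forall a b c, a < 3 -> b < 3 -> c < 3 -> H1 a b c = H2 a b c) ->
  DN H1 -> DN H2.
Proof.
move=> E hD a b c m ha hb hc hm; have := hD a b c m ha hb hc hm.
by rewrite /Wb !E.
Qed.

Lemma classify H : rng H -> DN H ->
  exists2 t, t \in tables & forall a b c, a < 3 -> b < 3 -> c < 3 -> H a b c = tf t a b c.
Proof.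
move=> hr hD.
pose l := [:: H 0 0 0; H 0 0 1; H 0 0 2; H 0 1 0; H 0 1 1; H 0 1 2; H 0 2 0; H 0 2 1; H 0 2 2].
have gE : forall x y, x < 3 -> y < 3 -> gl l x y = H 0 x y.
  by case=> [|[|[|]]] // y _; case: y => [|[|[|]]].
pose t := t3 (gl l).
have tE : forall a b c, a < 3 -> b < 3 -> c < 3 -> tf t a b c = H a b c.
  move=> a b c ha hb hc; rewrite /t /t3 nth_t3 //.
  apply: key3 => //; first by rewrite nth_t1 // (key1 hD hr gE).
  by rewrite nth_t2 // (key2 hD hr gE) // nth_t1 // (key1 hD hr gE).
have h000 : H 0 0 0 = 0.
  have /eqP := hD 0 0 0 0 isT isT isT isT.
  rewrite [ind 0 0]/ind /= => W.
  have : ind (H 0 0 0) 0 = 1 by lia.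
  by rewrite /ind; case: eqP.
have lin : l \in [seq 0 :: r | r <- seqs3 8].
  rewrite /l h000; apply: map_f.
  have -> : 8 = size [:: H 0 0 1; H 0 0 2; H 0 1 0; H 0 1 1; H 0 1 2; H 0 2 0; H 0 2 1; H 0 2 2] by [].
  by apply: mem_seqs3; rewrite /= !hr.
have := allP bigcheckP l lin; rewrite /chk -/t.
have -> : DNb (tf t) by apply/DN_DNb/(DN_ext _ hD) => a b c ha hb hc; rewrite tE.
move=> /hasP [t0 t0in /allP ag]; exists t0 => // a b c ha hb hc.
move: (ag a); rewrite mem_iota ha => /(_ isT) /allP /(_ b); rewrite mem_iota hb => /(_ isT).
by move=> /allP /(_ c); rewrite mem_iota hc => /(_ isT) /eqP <-; rewrite tE.
Qed.

Section Real.
Variable R : realType.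
Local Open Scope ring_scope.

Definition hn (h : rule) (a b c : nat) : nat := val (h (inord a, inord b, inord c)).
Definition S3 (F : nat -> R) := F 0%N + F 1%N + F 2%N.

Lemma sum_S3 (F : nat -> R) : \sum_(j < 3) F j = S3 F.
Proof. by rewrite !big_ord_recl big_ord0 addr0 /S3 addrA. Qed.

Lemma coE (M : 'cV[R]_3) (k : 'I_3) : M k 0 = co M k.
Proof. by rewrite /co inord_val. Qed.

Lemma e_co (q : 'I_3) m : (m < 3)%N -> co (e R q) m = (ind q m)%:R.
Proof.
move=> hm; rewrite /co /e mxE andbT /ind.
have -> : (inord m == q) = (q == m :> nat) by apply/idP/idP => /eqP <-; rewrite ?inordK ?inord_val.
by [].
Qed.

Lemma co_local h (x y z : 'cV[R]_3) m : (m < 3)%N ->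
  co (local h x y z) m =
  S3 (fun j => S3 (fun k => S3 (fun l => co x j * co y k * co z l * (ind (hn h j k l) m)%:R))).
Proof.
move=> hm; rewrite /co /local !summxE.
rewrite -sum_S3; apply: eq_bigr => j _; rewrite summxE.
rewrite -sum_S3; apply: eq_bigr => k _; rewrite summxE.
rewrite -sum_S3; apply: eq_bigr => l _.
rewrite mxE; have := e_co (h (j, k, l)) hm; rewrite /co => ->.
by rewrite !inord_val /hn !inord_val.
Qed.

Lemma simplex_sum (x : 'cV[R]_3) : in_simplex x -> co x 0 + co x 1 + co x 2 = 1.
Proof.
case=> hs _; rewrite -hs (eq_bigr (fun k : 'I_3 => co x k)) => [|k _]; last by rewrite coE.
by rewrite sum_S3.
Qed.

Lemma simplex_ge0 (x : 'cV[R]_3) j : in_simplex x -> 0 <= co x j.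
Proof. by case=> _ hp; rewrite /co. Qed.

Definition Jf (Jd : nat -> nat -> R) (x y : 'cV[R]_3) :=
  S3 (fun j => S3 (fun k => co x j * co y k * Jd j k)).

Lemma flux (G : nat -> nat -> nat -> R) (d : nat -> R) (Jd : nat -> nat -> R) x y z :
  (forall j k l, (j < 3)%N -> (k < 3)%N -> (l < 3)%N -> G j k l = d k + Jd j k - Jd k l) ->
  in_simplex x -> in_simplex y -> in_simplex z ->
  S3 (fun j => S3 (fun k => S3 (fun l => co x j * co y k * co z l * G j k l))) =
  S3 (fun k => co y k * d k) + Jf Jd x y - Jf Jd y z.
Proof.
move=> HG hx hy hz; rewrite /Jf /S3 !HG //.
have ex : co x 0 = 1 - co x 1 - co x 2 by rewrite -(simplex_sum hx); ring.
have ey : co y 0 = 1 - co y 1 - co y 2 by rewrite -(simplex_sum hy); ring.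
have ez : co z 0 = 1 - co z 1 - co z 2 by rewrite -(simplex_sum hz); ring.
rewrite ex ey ez; ring.
Qed.

Definition Jd (h : rule) (m : nat) (a b : nat) : R :=
  - ((ind (hn h 0 0 a) m)%:R - (ind 0 m)%:R) - ((ind (hn h 0 a b) m)%:R - (ind a m)%:R).

Lemma vertex h m : DN (hn h) -> (m < 3)%N -> forall j k l, (j < 3)%N -> (k < 3)%N -> (l < 3)%N ->
  (ind (hn h j k l) m)%:R = (ind k m)%:R + Jd h m j k - Jd h m k l :> R.
Proof.
move=> hD hm j k l hj hk hl.
have /eqP/(congr1 (fun n : nat => n%:R : R)) := hD j k l m hj hk hl hm.
have /eqP/(congr1 (fun n : nat => n%:R : R)) := hD k l 0%N m hk hl isT hm.
have /eqP/(congr1 (fun n : nat => n%:R : R)) := hD 0%N 0%N 0%N m isT isT isT hm.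
rewrite /Jd !natrD ?natrM => W3 W2 W1.
lra.
Qed.

Lemma eE (q : 'I_3) m : (m < 3)%N -> e R q (inord m) 0 = (ind q m)%:R.
Proof. exact: e_co. Qed.

Lemma local_flux h m x y z : DN (hn h) -> (m < 3)%N ->
  in_simplex x -> in_simplex y -> in_simplex z ->
  co (local h x y z) m = co y m + Jf (Jd h m) x y - Jf (Jd h m) y z.
Proof.
move=> hD hm hx hy hz; rewrite co_local // (@flux _ (fun k => (ind k m)%:R) (Jd h m)) //; last first.
  by move=> j k l hj hk hl; apply: vertex.
congr (_ + _ - _).
by case: m hm => [|[|[|]]] // _; rewrite /S3 /ind /=; ring.
Qed.


Lemma ind2 v : (v < 3)%N -> (ind v 2)%:R = 1 - (ind v 0)%:R - (ind v 1)%:R :> R.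
Proof. by case: v => [|[|[|]]] // _; rewrite /ind /=; ring. Qed.

Lemma local_simplex h (x y z : 'cV[R]_3) : in_simplex x -> in_simplex y -> in_simplex z ->
  in_simplex (local h x y z).
Proof.
move=> hx hy hz; split.
  rewrite (eq_bigr (fun k : 'I_3 => co (local h x y z) k)) => [|k _]; last by rewrite coE.
  rewrite sum_S3 /S3 !co_local // /S3 !ind2 /hn ?ltn_ord //.
  have ex : co x 0 = 1 - co x 1 - co x 2 by rewrite -(simplex_sum hx); ring.
  have ey : co y 0 = 1 - co y 1 - co y 2 by rewrite -(simplex_sum hy); ring.
  have ez : co z 0 = 1 - co z 1 - co z 2 by rewrite -(simplex_sum hz); ring.
  rewrite ex ey ez; ring.
move=> k; rewrite coE co_local // /S3.
have gx := simplex_ge0 _ hx; have gy := simplex_ge0 _ hy; have gz := simplex_ge0 _ hz.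
by rewrite !addr_ge0 // !mulr_ge0.
Qed.

Lemma step_per h (c : config R) (L : int) : (forall i, c (i + L) = c i) ->
  forall i, step h c (i + L) = step h c i.
Proof.
move=> hp i; rewrite /step.
have -> : i + L - 1 = (i - 1) + L by rewrite addrAC.
have -> : i + L + 1 = (i + 1) + L by rewrite addrAC.
by rewrite !hp.
Qed.

Lemma evol_inv h (c : config R) (L : int) t : (forall i, c (i + L) = c i) ->
  (forall i, in_simplex (c i)) ->
  (forall i, evol h t c (i + L) = evol h t c i) /\ (forall i, in_simplex (evol h t c i)).
Proof.
move=> hp hs; elim: t => [|t [IHp IHs]] //=; split.
  exact: step_per.
by move=> i; apply: local_simplex.
Qed.

Lemma DN_cnc h : DN (hn h) -> complete_number_conserving R h.
Proof.
move=> hD k L hL c hper hs t.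
have [hp' hs'] := evol_inv h t hper hs.
rewrite /evol [iter t.+1 _ _]/= -/(evol h t c).
set c' := evol h t c.
have hp2 : forall i, c' (i + Posz L) = c' i := hp'.
pose F (i : nat) := Jf (Jd h k) (c' (Posz i - 1)) (c' (Posz i)).
have E : forall i : nat, step h c' (Posz i) k 0 = c' (Posz i) k 0 - (F i.+1 - F i).
  move=> i; rewrite /step coE local_flux // -coE /F.
  have -> : Posz i.+1 - 1 = Posz i by lia.
  have -> : Posz i + 1 = Posz i.+1 by lia.
  lra.
rewrite /nu (eq_bigr _ (fun i _ => E i)) sumrB telescope_sumr //.
suff -> : F L.+1 = F 1%N by rewrite subrr subr0.
rewrite /F.
have -> : Posz L.+1 - 1 = 0 + Posz L by lia.
have -> : Posz L.+1 = 1 + Posz L by lia.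
by rewrite !hp2.
Qed.


Lemma sum_e (p : 'I_3) (F : 'I_3 -> 'cV[R]_3) : \sum_(j < 3) (e R p j 0) *: F j = F p.
Proof.
rewrite (bigD1 p) //= big1 => [|j njp]; first by rewrite /e mxE !eqxx scale1r addr0.
by rewrite /e mxE (negbTE njp) scale0r.
Qed.

Lemma local_e h p q r : local h (e R p) (e R q) (e R r) = e R (h (p, q, r)).
Proof.
rewrite /local.
under eq_bigr => j _ do under eq_bigr => k _ do under eq_bigr => l _ do rewrite -!scalerA.
under eq_bigr => j _ do under eq_bigr => k _ do rewrite -scaler_sumr.
under eq_bigr => j _ do rewrite -scaler_sumr.
apply: (etrans (sum_e _ _)) => /=.
under eq_bigr => k _ do rewrite -scaler_sumr.
by apply: (etrans (sum_e _ _)); apply: (etrans (sum_e _ _)).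
Qed.

Lemma e_simplex q : in_simplex (e R q).
Proof.
split; last by move=> k; rewrite /e mxE ler0n.
rewrite (bigD1 q) //= big1 ?addr0 => [|k /negbTE nkq]; first by rewrite /e mxE !eqxx.
by rewrite /e mxE nkq.
Qed.

Lemma stepS h (c : config R) (n : nat) :
  step h c (Posz n.+1) = local h (c (Posz n)) (c (Posz n.+1)) (c (Posz n.+2)).
Proof.
rewrite /step.
have -> : Posz n.+1 - 1 = Posz n by lia.
by have -> : Posz n.+1 + 1 = Posz n.+2 by lia.
Qed.

Lemma cnc_DN h : complete_number_conserving R h -> DN (hn h).
Proof.
move=> hc a b c m ha hb hcc hm.
pose w := [:: a; b; c; 0; 0]%N.
pose cfg : config R := fun i => e R (inord (nth 0%N w (absz (i %% 5)%Z))).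
have cfgE : forall n : nat, cfg (Posz n) = e R (inord (nth 0%N w (n %% 5))).
  by move=> n; rewrite /cfg modz_nat.
have per : forall i : int, cfg (i + Posz 5) = cfg i by move=> i; rewrite /cfg modzDr.
have := hc (inord m) 5%N isT cfg per (fun i => e_simplex _) 0%N.
rewrite /evol /= /nu.
do 5 rewrite big_ltn //.
rewrite big_geq //.
do 5 rewrite big_ltn //.
rewrite big_geq //.
rewrite ![in X in X = _ -> _]stepS !cfgE !local_e /w.
rewrite (_ : (5 %% 5 = 0)%N) // (_ : (6 %% 5 = 1)%N) // !modn_small //=.
rewrite !eE // !addr0 -!natrD => /eqP; rewrite eqr_nat => /eqP.
rewrite /ind !inordK // => E.
rewrite /Wb /hn /ind; apply/eqP.
move: E; set x1 := nat_of_bool _; set x2 := nat_of_bool _; set x3 := nat_of_bool _; set x4 := nat_of_bool _; set x5 := nat_of_bool _; set x6 := nat_of_bool _; set x7 := nat_of_bool _; set x8 := nat_of_bool _; set x9 := nat_of_bool _.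
clearbody x1 x2 x3 x4 x5 x6 x7 x8 x9. lia.
Qed.


Definition mkRule (t : seq nat) : rule :=
  [ffun p : 'I_3 * 'I_3 * 'I_3 => inord (nth 0%N t (p.1.1 * 9 + p.1.2 * 3 + p.2))].

Lemma nth_lt3 (t : seq nat) i : all (fun v => v < 3)%N t -> (nth 0%N t i < 3)%N.
Proof.
move=> ht; case: (ltnP i (size t)) => hi; first exact: (all_nthP 0%N ht).
by rewrite nth_default.
Qed.

Lemma hn_mk t a b c : all (fun v => v < 3)%N t -> (a < 3)%N -> (b < 3)%N -> (c < 3)%N ->
  hn (mkRule t) a b c = tf t a b c.
Proof.
move=> ht ha hb hc; rewrite /hn ffunE /= inordK; last exact: nth_lt3.
by rewrite !inordK.
Qed.

Lemma vecP (u v : 'cV[R]_3) : co u 0 = co v 0 -> co u 1 = co v 1 -> co u 2 = co v 2 -> u = v.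
Proof.
move=> e0 e1 e2; apply/matrixP => i j; rewrite (ord1 j) -(inord_val i).
by have := ltn_ord i; case: (val i) => [|[|[|]]].
Qed.

Lemma co_vec3 (a b c : R) : co (vec3 a b c) 0 = a /\ co (vec3 a b c) 1 = b /\ co (vec3 a b c) 2 = c.
Proof. by rewrite /co /vec3 !mxE !inordK. Qed.

Lemma co_vec3_0 (a b c : R) : co (vec3 a b c) 0 = a. Proof. by case: (co_vec3 a b c). Qed.
Lemma co_vec3_1 (a b c : R) : co (vec3 a b c) 1 = b. Proof. by case: (co_vec3 a b c) => _ []. Qed.
Lemma co_vec3_2 (a b c : R) : co (vec3 a b c) 2 = c. Proof. by case: (co_vec3 a b c) => _ []. Qed.

Lemma rule_is_tab t (F : 'cV[R]_3 -> 'cV[R]_3 -> 'cV[R]_3 -> 'cV[R]_3) :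
  all (fun v => v < 3)%N t ->
  (forall x y z, in_simplex x -> in_simplex y -> in_simplex z -> forall m, (m < 3)%N ->
     S3 (fun j => S3 (fun k => S3 (fun l => co x j * co y k * co z l * (ind (tf t j k l) m)%:R)))
     = co (F x y z) m) ->
  rule_is (mkRule t) F.
Proof.
move=> ht HF x y z hx hy hz.
by apply: vecP; rewrite co_local // -HF // /S3 !hn_mk.
Qed.


Lemma size_tables : size tables = 15%N.
Proof. by []. Qed.

Lemma tables_valid : all (fun t => all (fun v => v < 3)%N t) tables.
Proof. by []. Qed.

Lemma listed_ok (i : nat) : (i < 15)%N -> rule_is (mkRule (nth [::] tables i)) (@listed R i).
Proof.
move=> hi; apply: rule_is_tab.
  by apply: (all_nthP [::] tables_valid); rewrite size_tables.
move=> x y z hx hy hz m hm.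
have ex : co x 0 = 1 - co x 1 - co x 2 by rewrite -(simplex_sum hx); ring.
have ey : co y 0 = 1 - co y 1 - co y 2 by rewrite -(simplex_sum hy); ring.
have ez : co z 0 = 1 - co z 1 - co z 2 by rewrite -(simplex_sum hz); ring.
case: i hi => [|[|[|[|[|[|[|[|[|[|[|[|[|[|[|i]]]]]]]]]]]]]]] // _;
case: m hm => [|[|[|m]]] // _;
rewrite /listed /S3 /tf /ind /=;
rewrite ?co_vec3_0 ?co_vec3_1 ?co_vec3_2;
rewrite ex ey ez; ring.
Qed.

End Real.

Lemma tables_DN : all (fun t => DNb (tf t)) tables.
Proof. by vm_compute. Qed.

Definition tabf (h : rule) : seq nat :=
  [seq hn h (i %/ 9) (i %/ 3 %% 3) (i %% 3) | i <- iota 0 27].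

Lemma tabf_mk t : all (fun v => v < 3) t ->
  tabf (mkRule t) = [seq tf t (i %/ 9) (i %/ 3 %% 3) (i %% 3) | i <- iota 0 27].
Proof.
move=> ht; rewrite /tabf; apply/eq_in_map => i; rewrite mem_iota /= => hi.
by apply: hn_mk => //; rewrite ?ltn_pmod // ltn_divLR.
Qed.

Lemma map_tabf : map tabf (map mkRule tables) = tables.
Proof.
rewrite -map_comp.
have -> : map (tabf \o mkRule) tables =
  map (fun t => [seq tf t (i %/ 9) (i %/ 3 %% 3) (i %% 3) | i <- iota 0 27]) tables.
  by apply/eq_in_map => t tin; rewrite /= tabf_mk //; apply: (allP tables_valid).
by vm_compute.
Qed.

Theorem mainTheorem4 (R : realType) :
  exists s : seq (rule),
    [/\ size s = 15%N, uniq s,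
        (forall h : rule, @complete_number_conserving R h <-> h \in s)
      & (forall i : 'I_15, @rule_is R (nth [ffun _ => ord0] s i) (@listed R i))].
Proof.
exists (map mkRule tables); split.
- by rewrite size_map.
- by apply: (@map_uniq _ _ tabf); rewrite map_tabf.
- move=> h; split.
    move=> hc; have hD := cnc_DN hc.
    have hr : rng (hn h) by move=> a b c _ _ _; exact: ltn_ord.
    have [t tin E] := classify hr hD.
    have -> : h = mkRule t.
      apply/ffunP => -[[p q] r]; rewrite ffunE; apply/val_inj.
      rewrite /= inordK; last by apply: nth_lt3; apply: (allP tables_valid).
      by have := E p q r (ltn_ord p) (ltn_ord q) (ltn_ord r); rewrite /hn !inord_val.
    exact: map_f.
  move=> /mapP [t tin ->]; apply: DN_cnc.
  apply: (@DN_ext (tf t)); last by apply: DNb_DN; apply: (allP tables_DN).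
  by move=> a b c ha hb hc; rewrite hn_mk //; apply: (allP tables_valid).
- move=> i; rewrite (nth_map [::]); last by rewrite size_tables.
  exact: listed_ok.
Qed.
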